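(* Let $A$ and $B$ be rings, $f: A\to B$ a ring homomorphism and $J$ a proper ideal of $B$. Let $S$ be the set of regular central elements of $B$ (central elements that are not zero divisors), and assume $J\cap S\neq\varnothing$. Then $A\bowtie^{f}J$ is an Armendariz ring if and only if both $A$ and $f(A)+J$ are Armendariz rings.
   Context: All rings are associative with identity (not necessarily commutative), ring homomorphisms are unital, and ideals are two-sided. For a ring homomorphism $f:A\to B$ and an ideal $J$ of $B$, the amalgamation is the subring $A\bowtie^{f}J=\{(a,f(a)+j)\mid a\in A,\ j\in J\}$ of $A\times B$; $f(A)+J=\{f(a)+j: a\in A, j\in J\}$ is a subring of $B$. A ring $R$ is Armendariz if whenever $p(x)=\sum_{i=0}^n a_ix^i$ and $q(x)=\sum_{j=0}^m b_jx^j$ in $R[x]$ satisfy $p(x)q(x)=0$, then $a_ib_j=0$ for all $i,j$. *)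

(* Defs.v *)
From HB Require Import structures.
From mathcomp Require Import all_boot all_order all_algebra.
Set Implicit Arguments. Unset Strict Implicit. Unset Printing Implicit Defensive.
Import GRing.Theory.
Local Open Scope ring_scope.

(* Polynomials over S are identified with the
   polynomials over R all of whose coefficients lie in S. *)
Definition armendariz_in (R : nzRingType) (S : R -> Prop) : Prop :=
  forall p q : {poly R},
    (forall i, S p`_i) -> (forall j, S q`_j) -> p * q = 0 ->
    forall i j, p`_i * q`_j = 0.

Definition armendariz (R : nzRingType) : Prop := armendariz_in (fun _ : R => True).

Definition is_ideal2s (R : nzRingType) (J : R -> Prop) : Prop :=
  [/\ J 0, (forall x y, J x -> J y -> J (x + y)), (forall x, J x -> J (- x)),
      (forall r x, J x -> J (r * x)) & (forall r x, J x -> J (x * r))].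

Definition proper_ideal2s (R : nzRingType) (J : R -> Prop) : Prop :=
  is_ideal2s J /\ ~ J 1.

Definition central_elt (R : nzRingType) (s : R) : Prop := forall b, s * b = b * s.

Definition regular_elt (R : nzRingType) (s : R) : Prop :=
  forall b, (s * b = 0 -> b = 0) /\ (b * s = 0 -> b = 0).

(* A ⋈^f J as a subset of A × B *)
Definition amalg (A B : nzRingType) (f : {rmorphism A -> B}) (J : B -> Prop)
  : A * B -> Prop :=
  fun x => exists a j, J j /\ x = (a, f a + j).

Definition fAJ (A B : nzRingType) (f : {rmorphism A -> B}) (J : B -> Prop)
  : B -> Prop :=
  fun b => exists a j, J j /\ b = f a + j.

(* Main.v *)
Require Import Defs.
From HB Require Import structures.
From mathcomp Require Import all_boot all_order all_algebra.
Import GRing.Theory.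
Local Open Scope ring_scope.
Require Import Defs.

Section Aux.
Variables A B : nzRingType.

Definition pairp (p : {poly A}) (q : {poly B}) : {poly (A * B)%type} :=
  \poly_(i < maxn (size p) (size q)) (p`_i, q`_i).

Lemma coef_pairp p q i : (pairp p q)`_i = (p`_i, q`_i).
Proof.
rewrite /pairp coef_poly; case: ifP => // /negbT; rewrite -leqNgt geq_max.
by case/andP=> h1 h2; rewrite !nth_default.
Qed.

Lemma coef_fst (P : {poly (A * B)%type}) i : (map_poly fst P)`_i = (P`_i).1.
Proof. by rewrite coef_map. Qed.

Lemma coef_snd (P : {poly (A * B)%type}) i : (map_poly snd P)`_i = (P`_i).2.
Proof. by rewrite coef_map. Qed.

Lemma poly_pair0 (P : {poly (A * B)%type}) :
  map_poly fst P = 0 -> map_poly snd P = 0 -> P = 0.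
Proof.
move=> h1 h2; apply/polyP => k; rewrite coef0.
have e1 := coef_fst P k; have e2 := coef_snd P k.
rewrite h1 coef0 in e1; rewrite h2 coef0 in e2.
by case: (P`_k) e1 e2 => x y /= <- <-.
Qed.

Lemma map_fst_mul (P Q : {poly (A * B)%type}) :
  map_poly fst (P * Q) = map_poly fst P * map_poly fst Q.
Proof. by rewrite rmorphM. Qed.

Lemma map_snd_mul (P Q : {poly (A * B)%type}) :
  map_poly snd (P * Q) = map_poly snd P * map_poly snd Q.
Proof. by rewrite rmorphM. Qed.

Lemma map_fst_pairp p q : map_poly fst (pairp p q) = p.
Proof. by apply/polyP => i; rewrite coef_fst coef_pairp. Qed.

Lemma map_snd_pairp p q : map_poly snd (pairp p q) = q.
Proof. by apply/polyP => i; rewrite coef_snd coef_pairp. Qed.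

End Aux.

Theorem theorem2p2 (A B : nzRingType) (f : {rmorphism A -> B}) (J : B -> Prop) :
  proper_ideal2s J ->
  (exists s : B, J s /\ central_elt s /\ regular_elt s) ->
  (armendariz_in (amalg f J) <-> armendariz A /\ armendariz_in (fAJ f J)).
Proof.
move=> [[J0 JD JN JL JR] _] [s [Js [cs rs]]]; split.
- move=> H; split.
  + move=> p q _ _ pq i j.
    pose P := @pairp A B p (map_poly f p); pose Q := @pairp A B q (map_poly f q).
    have hP : forall i, amalg f J P`_i.
      by move=> k; exists p`_k, 0; split => //; rewrite coef_pairp coef_map addr0.
    have hQ : forall i, amalg f J Q`_i.
      by move=> k; exists q`_k, 0; split => //; rewrite coef_pairp coef_map addr0.
    have PQ : P * Q = 0.
      apply: poly_pair0.
        by rewrite map_fst_mul !map_fst_pairp pq.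
      by rewrite map_snd_mul !map_snd_pairp -rmorphM pq rmorph0.
    have := H P Q hP hQ PQ i j.
    by rewrite !coef_pairp => -[].
  + move=> p q hp hq pq i j.
    have Jsp : forall k, J (s * p`_k) by move=> k; exact: JR.
    have Jsq : forall k, J (s * q`_k) by move=> k; exact: JR.
    pose P := @pairp A B (0 : {poly A}) (s%:P * p).
    pose Q := @pairp A B (0 : {poly A}) (s%:P * q).
    have hP : forall i, amalg f J P`_i.
      by move=> k; exists 0, (s * p`_k); split => //; rewrite coef_pairp coef0 coefCM rmorph0 add0r.
    have hQ : forall i, amalg f J Q`_i.
      by move=> k; exists 0, (s * q`_k); split => //; rewrite coef_pairp coef0 coefCM rmorph0 add0r.
    have cP : p * s%:P = s%:P * p.
      by apply/polyP => k; rewrite coefMC coefCM cs.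
    have PQ : P * Q = 0.
      apply: poly_pair0.
        by rewrite map_fst_mul !map_fst_pairp mul0r.
      rewrite map_snd_mul !map_snd_pairp.
      by rewrite -mulrA (mulrA p) cP -(mulrA _ p q) pq !mulr0.
    have := H P Q hP hQ PQ i j.
    rewrite !coef_pairp !coefCM => -[] _ e.
    have e2 : s * (s * (p`_i * q`_j)) = 0.
      by rewrite -[X in _ = X]e -!mulrA; congr (s * _); rewrite !mulrA -(cs p`_i).
    by apply: (proj1 (rs _)); apply: (proj1 (rs _)).
- move=> [HA HB] P Q hP hQ PQ i j.
  have e1 : map_poly fst P * map_poly fst Q = 0 by rewrite -map_fst_mul PQ rmorph0.
  have e2 : map_poly snd P * map_poly snd Q = 0 by rewrite -map_snd_mul PQ rmorph0.
  have h1 := HA _ _ (fun _ => I) (fun _ => I) e1 i j.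
  have hp : forall k, fAJ f J (map_poly snd P)`_k.
    by move=> k; rewrite coef_snd; case: (hP k) => a [jj [Jj ->]]; exists a, jj.
  have hq : forall k, fAJ f J (map_poly snd Q)`_k.
    by move=> k; rewrite coef_snd; case: (hQ k) => a [jj [Jj ->]]; exists a, jj.
  have h2 := HB _ _ hp hq e2 i j.
  rewrite !coef_fst in h1; rewrite !coef_snd in h2.
  by case: (P`_i) h1 h2 => x y; case: (Q`_j) => z w /= h1 h2; apply: (f_equal2 pair h1 h2).
Qed.
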